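(* Let $n\ge1$. If $\{H_1,H_2\}$ is a Hamilton decomposition of $G_{n,2}$ and $\{E_1,\dots,E_n\}$ is a Hamilton decomposition of $Q_{2n}$ (each $E_i$ taken as a directed Hamilton cycle starting at $\mathbf 0$), then $\{f(E_i,H_j): 1\le i\le n,\ 1\le j\le 2\}$ is a Hamilton decomposition of $Q_{4n}$.
   Context: A Hamilton decomposition of a graph is a partition of its edge set into edge-disjoint Hamilton cycles. The hypercube $Q_{2n}$ is realized as the graph whose vertices are the quaternary strings $q_1\cdots q_n$, $q_i\in\{0,1,2,3\}$, adjacent iff they differ in exactly one position and there by $\pm1\pmod 4$; $\mathbf 0=0\cdots0$. $G_{n,k}=C_{4^n}\Box\cdots\Box C_{4^n}$ ($k$ factors) has vertex set $(\mathbb Z/4^n\mathbb Z)^k$, vertices adjacent iff they differ in exactly one coordinate and there by $\pm1\pmod{4^n}$. For a directed Hamilton cycle $E$ of $Q_{2n}$ listing vertices $e_0=\mathbf 0,e_1,\dots,e_{4^n-1}$, put $\pi_E(e_p)=p$. Identify $V(Q_{4n})$ with pairs $(u,w)$ of quaternary strings of length $n$ ($Q_{4n}=Q_{2n}\Box Q_{2n}$), and let $\Phi_E(u,w)=(\pi_E(u),\pi_E(w))\in V(G_{n,2})$; $\Phi_E^{-1}$ maps edges of $G_{n,2}$ to edges of $Q_{4n}$. For a Hamilton cycle $H$ of $G_{n,2}$, $f(E,H):=\Phi_E^{-1}(H)$. *)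

(* Defs.v *)
From mathcomp Require Import all_boot.
Set Implicit Arguments. Unset Strict Implicit. Unset Printing Implicit Defensive.

Section Graph.
Variable T : finType.
Variable adj : rel T.

Definition edge_set : {set {set T}} :=
  [set e : {set T} | [exists x, exists y, adj x y && (e == [set x; y])]].

Definition is_ham_cycle (c : seq T) : bool :=
  [&& uniq c, size c == #|T| & cycle adj c].

Definition cycle_edges (c : seq T) : {set {set T}} :=
  [set [set x; next c x] | x in c].

Definition ham_decomp (I : finType) (C : I -> seq T) : Prop :=
  [/\ forall i, is_ham_cycle (C i),
      forall i j, i != j -> [disjoint cycle_edges (C i) & cycle_edges (C j)]
    & \bigcup_(i in I) cycle_edges (C i) = edge_set].
End Graph.

(** * The hypercube Q_{2n} as quaternary strings of length n *)
Definition qstr (n : nat) := {ffun 'I_n -> 'I_4}.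

Definition qzero (n : nat) : qstr n := [ffun => ord0].

Definition cadj (m a b : nat) : bool := (b == (a + 1) %% m) || (a == (b + 1) %% m).

Definition qadj (n : nat) : rel (qstr n) := fun u v =>
  [exists i : 'I_n, [forall j : 'I_n, (j != i) ==> (u j == v j)]
                    && cadj 4 (u i) (v i)].

(** * The torus G_{n,2} = C_{4^n} [] C_{4^n} *)
Definition gvert (n : nat) := ('I_(4 ^ n) * 'I_(4 ^ n))%type.

Definition gadj (n : nat) : rel (gvert n) := fun x y =>
  ((x.1 == y.1) && cadj (4 ^ n) x.2 y.2) || ((x.2 == y.2) && cadj (4 ^ n) x.1 y.1).

(** * Q_{4n} = Q_{2n} [] Q_{2n}: a pair (u,w) is the length-2n string u w *)
Definition qcat (n : nat) (u w : qstr n) : qstr (n + n) :=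
  [ffun i => match split i with inl j => u j | inr j => w j end].

(* Phi_E^{-1}(p,q) = (e_p, e_q) where E = e_0 e_1 ... e_{4^n-1} *)
Definition Phi_inv (n : nat) (E : seq (qstr n)) (x : gvert n) : qstr (n + n) :=
  qcat (nth (qzero n) E x.1) (nth (qzero n) E x.2).

Definition fEH (n : nat) (E : seq (qstr n)) (H : seq (gvert n)) : seq (qstr (n + n)) :=
  map (Phi_inv E) H.

(* Main.v *)
Require Import Defs.
From mathcomp Require Import all_boot zify.
Set Implicit Arguments. Unset Strict Implicit. Unset Printing Implicit Defensive.

Lemma cadj_irr m a : 1 < m -> a < m -> cadj m a a = false.
Proof.
move=> hm ha; rewrite /cadj orbb; apply/negbTE/eqP => e.
case: (ltnP (a+1) m) => h.
  by move: e; rewrite modn_small //; lia.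
have : a + 1 = m by lia.
move=> e2; move: e; rewrite e2 modnn; lia.
Qed.

Lemma qcatL n (a b : qstr n) j : qcat a b (lshift n j) = a j.
Proof. by rewrite /qcat ffunE (unsplitK (inl _ j)). Qed.
Lemma qcatR n (a b : qstr n) j : qcat a b (rshift n j) = b j.
Proof. by rewrite /qcat ffunE (unsplitK (inr _ j)). Qed.

Lemma qcat_inj n (a b a' b' : qstr n) : qcat a b = qcat a' b' -> a = a' /\ b = b'.
Proof.
move=> e; split; apply/ffunP => j.
- by rewrite -(qcatL a b) -(qcatL a' b') e.
- by rewrite -(qcatR a b) -(qcatR a' b') e.
Qed.

Definition qleft n (u : qstr (n + n)) : qstr n := [ffun j => u (lshift n j)].
Definition qright n (u : qstr (n + n)) : qstr n := [ffun j => u (rshift n j)].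
Lemma qcat_split n (u : qstr (n + n)) : u = qcat (qleft u) (qright u).
Proof.
apply/ffunP => i; rewrite /qcat ffunE; case: split_ordP => j -> ; by rewrite ffunE.
Qed.

Lemma cadj_sym m a b : cadj m a b = cadj m b a.
Proof. by rewrite /cadj orbC. Qed.

Lemma qadj_sym n (u v : qstr n) : qadj u v -> qadj v u.
Proof.
case/existsP => i /andP [/forallP h c]; apply/existsP; exists i.
rewrite cadj_sym c andbT; apply/forallP => j; apply/implyP => hj.
by rewrite eq_sym (implyP (h j) hj).
Qed.

Lemma qadj_irr n (u : qstr n) : qadj u u = false.
Proof. apply/negbTE/existsP => -[i /andP [_]]; by rewrite cadj_irr. Qed.

Lemma lr_neq n (j k : 'I_n) : (lshift n j == rshift n k) = false.
Proof. apply/negbTE/eqP => /(congr1 val) /=; have := ltn_ord j; lia. Qed.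

Lemma qadj_catL n (a a' b : qstr n) : qadj a a' -> qadj (qcat a b) (qcat a' b).
Proof.
case/existsP => i /andP [/forallP h c]; apply/existsP; exists (lshift n i).
rewrite !qcatL c andbT; apply/forallP => j; apply/implyP.
case: (split_ordP j) => k ->; rewrite ?qcatL ?qcatR // => hk.
apply: (implyP (h k)); apply: contra hk => /eqP -> //.
Qed.

Lemma qadj_catR n (a b b' : qstr n) : qadj b b' -> qadj (qcat a b) (qcat a b').
Proof.
case/existsP => i /andP [/forallP h c]; apply/existsP; exists (rshift n i).
rewrite !qcatR c andbT; apply/forallP => j; apply/implyP.
case: (split_ordP j) => k ->; rewrite ?qcatL ?qcatR // => hk.
apply: (implyP (h k)); apply: contra hk => /eqP -> //.
Qed.

Lemma qadj_cat_inv n (a b a' b' : qstr n) : qadj (qcat a b) (qcat a' b') ->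
  (b = b' /\ qadj a a') \/ (a = a' /\ qadj b b').
Proof.
case/existsP => i /andP [/forallP h c]; case: (split_ordP i) => k ek; subst i.
- left; split.
    apply/ffunP => j; rewrite -(qcatR a b) -(qcatR a' b').
    by apply/eqP; apply: (implyP (h _)); rewrite eq_sym lr_neq.
  apply/existsP; exists k; move: c; rewrite !qcatL => ->; rewrite andbT.
  apply/forallP => j; apply/implyP => hj; rewrite -(qcatL a b) -(qcatL a' b').
  apply: (implyP (h _)); apply: contra hj => /eqP /lshift_inj ->.
  done.
- right; split.
    apply/ffunP => j; rewrite -(qcatL a b) -(qcatL a' b').
    by apply/eqP; apply: (implyP (h _)); rewrite lr_neq.
  apply/existsP; exists k; move: c; rewrite !qcatR => ->; rewrite andbT.
  apply/forallP => j; apply/implyP => hj; rewrite -(qcatR a b) -(qcatR a' b').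
  apply: (implyP (h _)); apply: contra hj => /eqP /rshift_inj ->.
  done.
Qed.

Lemma next_nth_mod (T : eqType) (x0 : T) s i : uniq s -> i < size s ->
  next s (nth x0 s i) = nth x0 s ((i + 1) %% size s).
Proof.
move=> us hi; rewrite next_nth mem_nth //.
case: s us hi => [//|y p] us hi; rewrite index_uniq //=; move: hi => /= hi.
case: (ltnP i (size p)) => h.
  rewrite modn_small; last by lia.
  by rewrite addn1 /= (set_nth_default x0).
have -> : i = size p by lia.
by rewrite addn1 modnn nth_default.
Qed.

Lemma ham_mem (T : finType) (adj : rel T) c x : is_ham_cycle adj c -> x \in c.
Proof.
case/and3P => uc /eqP sc _.
have hc : #|c| = #|T| by rewrite (card_uniqP uc) sc.
by rewrite ((subset_cardP hc (subset_predT _)) x).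
Qed.

Lemma set2_eq (T : finType) (a b c d : T) : [set a; b] = [set c; d] ->
  (a = c /\ b = d) \/ (a = d /\ b = c).
Proof.
move=> e.
have ha : a \in [set c; d] by rewrite -e setU11.
have hb : b \in [set c; d] by rewrite -e !inE eqxx orbT.
have hc : c \in [set a; b] by rewrite e setU11.
have hd : d \in [set a; b] by rewrite e !inE eqxx orbT.
move: ha hb hc hd; rewrite !inE => /orP [] /eqP -> /orP [] /eqP ->; rewrite ?eqxx /=;
  try by [left|right].
- move=> _ /orP [] /eqP ->; by [left|right].
- move=> /orP [] /eqP -> _; by [left|right].
Qed.

Lemma imset2 (aT rT : finType) (f : aT -> rT) x y : f @: [set x; y] = [set f x; f y].
Proof. by rewrite imsetU !imset_set1. Qed.

Lemma ce_map (T U : finType) (f : T -> U) (c : seq T) e : uniq c -> injective f ->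
  (e \in cycle_edges (map f c)) = (e \in (fun A : {set T} => f @: A) @: cycle_edges c).
Proof.
move=> uc fi; apply/imsetP/imsetP.
- case=> y /mapP [x xc ->] ->; exists [set x; next c x]; first by apply: imset_f.
  by rewrite imset2 next_map.
- case=> A /imsetP [x xc ->] ->; exists (f x); first by apply: map_f.
  by rewrite imset2 next_map.
Qed.

Section Phi.
Variable n : nat.
Variable E : seq (qstr n).
Hypothesis hE : is_ham_cycle (@qadj n) E.

Lemma uE : uniq E. Proof. by case/and3P: hE. Qed.
Lemma sE : size E = 4 ^ n. Proof. case/and3P: hE => _ /eqP -> _. by rewrite card_ffun !card_ord. Qed.
Lemma cE : cycle (@qadj n) E. Proof. by case/and3P: hE. Qed.

Lemma nth_next p q : p < 4 ^ n -> q == (p + 1) %% 4 ^ n ->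
  nth (qzero n) E q = next E (nth (qzero n) E p).
Proof. by move=> hp /eqP ->; rewrite next_nth_mod ?uE ?sE. Qed.

Lemma nth_adj p q : p < 4 ^ n -> q < 4 ^ n -> cadj (4 ^ n) p q ->
  qadj (nth (qzero n) E p) (nth (qzero n) E q).
Proof.
move=> hp hq /orP [] h.
- rewrite (nth_next hp h); apply: next_cycle cE _; by rewrite mem_nth ?sE.
- rewrite (nth_next hq h); apply: qadj_sym; apply: next_cycle cE _; by rewrite mem_nth ?sE.
Qed.

Lemma nth_ce p q : p < 4 ^ n -> q < 4 ^ n -> cadj (4 ^ n) p q ->
  [set nth (qzero n) E p; nth (qzero n) E q] \in cycle_edges E.
Proof.
move=> hp hq /orP [] h.
- rewrite (nth_next hp h); apply: imset_f; by rewrite mem_nth ?sE.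
- rewrite setUC (nth_next hq h); apply: imset_f; by rewrite mem_nth ?sE.
Qed.

Lemma Phi_adj x y : gadj x y -> qadj (Phi_inv E x) (Phi_inv E y).
Proof.
case: x y => [p q] [p' q'] /orP [] /andP [/eqP /= e h]; rewrite /Phi_inv /= -e.
- by apply: qadj_catR; apply: nth_adj.
- by apply: qadj_catL; apply: nth_adj.
Qed.

Lemma Phi_inj : injective (Phi_inv E).
Proof.
case=> [p q] [p' q'] /qcat_inj [e1 e2].
have h : forall a b : 'I_(4 ^ n), nth (qzero n) E a = nth (qzero n) E b -> a = b.
  move=> a b /eqP; rewrite nth_uniq ?sE ?uE // => /eqP; exact: val_inj.
by rewrite /= in e1 e2; rewrite (h _ _ e1) (h _ _ e2).
Qed.

Definition lifted (e : {set qstr (n + n)}) := exists a a' b,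
  [/\ [set a; a'] \in cycle_edges E, qadj a a' &
      e = [set qcat a b; qcat a' b] \/ e = [set qcat b a; qcat b a']].

Lemma Phi_lifted x y : gadj x y -> lifted [set Phi_inv E x; Phi_inv E y].
Proof.
case: x y => [p q] [p' q'] /orP [] /andP [/eqP /= e h]; rewrite /Phi_inv /= -e.
- exists (nth (qzero n) E q), (nth (qzero n) E q'), (nth (qzero n) E p).
  split; [exact: nth_ce | exact: nth_adj | by right].
- exists (nth (qzero n) E p), (nth (qzero n) E p'), (nth (qzero n) E q).
  split; [exact: nth_ce | exact: nth_adj | by left].
Qed.
End Phi.

Lemma lifted_disj n (E1 E2 : seq (qstr n)) e : lifted E1 e -> lifted E2 e ->
  ~~ [disjoint cycle_edges E1 & cycle_edges E2].
Proof.
case=> a [a' [b [h1 adj1 f1]]] [c [c' [d [h2 adj2 f2]]]].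
have key : [set a; a'] \in cycle_edges E2 -> ~~ [disjoint cycle_edges E1 & cycle_edges E2].
  by move=> h; apply/negP => /disjointFr /(_ h1); rewrite h.
have na : a != a' by apply: contraT => /negPn /eqP ee; move: adj1; rewrite ee qadj_irr.
have nc : c != c' by apply: contraT => /negPn /eqP ee; move: adj2; rewrite ee qadj_irr.
case: f1 f2 => -> [] /set2_eq [] [/qcat_inj [? ?] /qcat_inj [? ?]]; subst;
  rewrite ?eqxx in na nc => //; apply: key; by rewrite // setUC.
Qed.

Lemma ord_data n (E : seq (qstr n)) x b : is_ham_cycle (@qadj n) E -> x \in E ->
  exists P P' Q : 'I_(4 ^ n), [/\ cadj (4 ^ n) P P', nth (qzero n) E P = x,
     nth (qzero n) E P' = next E x & nth (qzero n) E Q = b].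
Proof.
move=> hE xE.
have hp : index x E < 4 ^ n by rewrite -(sE hE) index_mem.
have hq : index b E < 4 ^ n by rewrite -(sE hE) index_mem (ham_mem b hE).
have hp' : (index x E + 1) %% 4 ^ n < 4 ^ n by rewrite ltn_mod; move: hp; case: (4 ^ n).
exists (Ordinal hp), (Ordinal hp'), (Ordinal hq); split => /=.
- by rewrite /cadj eqxx.
- by rewrite nth_index.
- by rewrite -{2}(nth_index (qzero n) xE) (nth_next hE hp (eqxx _)).
- by rewrite nth_index // (ham_mem b hE).
Qed.

Lemma imset_qcatL n (a a' b : qstr n) :
  [set qcat a b; qcat a' b] = (fun t => qcat t b) @: [set a; a'].
Proof. by rewrite imset2. Qed.
Lemma imset_qcatR n (a a' b : qstr n) :
  [set qcat b a; qcat b a'] = (fun t => qcat b t) @: [set a; a'].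
Proof. by rewrite imset2. Qed.

Theorem corollary1 (n : nat) (Hn : 0 < n)
  (H : 'I_2 -> seq (gvert n)) (E : 'I_n -> seq (qstr n)) :
  ham_decomp (@gadj n) H ->
  ham_decomp (@qadj n) E ->
  (forall i, head (qzero n) (E i) = qzero n) ->
  ham_decomp (@qadj (n + n)) (fun ij : 'I_n * 'I_2 => fEH (E ij.1) (H ij.2)).
Proof.
move=> [hamH disjH unH] [hamE disjE unE] _.
have cg : forall j x, x \in H j -> gadj x (next (H j) x).
  by move=> j x xH; apply: next_cycle xH; case/and3P: (hamH j).
have uH : forall j, uniq (H j) by move=> j; case/and3P: (hamH j).
split.
- case=> i j; rewrite /is_ham_cycle /fEH /= (map_inj_uniq (Phi_inj (hamE i))) size_map cycle_map.
  case/and3P: (hamH j) => -> /eqP -> cH /=; apply/andP; split.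
    by rewrite !card_prod card_ffun !card_ord expnD.
  by apply: sub_cycle cH => x y /(Phi_adj (hamE i)).
- case=> i j [i' j'] hne; rewrite disjoint_subset; apply/subsetP => e h1.
  rewrite inE; apply/negP => h2; move: h1 h2.
  rewrite /fEH /= (ce_map _ (uH j) (Phi_inj (hamE i))) (ce_map _ (uH j') (Phi_inj (hamE i'))).
  case/imsetP => A /imsetP [z zH ->] -> /imsetP [B /imsetP [z' zH' ->]] eAB.
  have [ei | nei] := eqVneq i i'.
  + subst i'; have nj : j != j' by apply: contra hne => /eqP ->.
    have eq := imset_inj (Phi_inj (hamE i)) eAB.
    move: (disjH _ _ nj) => /disjointFr /(_ (imset_f _ zH)); rewrite eq.
    by rewrite (imset_f _ zH').
  + have l1 := Phi_lifted (hamE i) (cg _ _ zH); rewrite -imset2 in l1.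
    have l2 := Phi_lifted (hamE i') (cg _ _ zH'); rewrite -imset2 -eAB imset2 in l2.
    rewrite imset2 in l1.
    by move: (lifted_disj l1 l2); rewrite disjE.
- apply/setP => e; apply/bigcupP/idP.
  + case=> -[i j] _; rewrite /fEH /= (ce_map _ (uH j) (Phi_inj (hamE i))).
    case/imsetP => A /imsetP [z zH ->] ->; rewrite imset2 inE.
    apply/existsP; exists (Phi_inv (E i) z); apply/existsP; exists (Phi_inv (E i) (next (H j) z)).
    by rewrite (Phi_adj (hamE i) (cg _ _ zH)) eqxx.
  + rewrite inE => /existsP [u /existsP [v /andP [huv /eqP ->]]].
    rewrite (qcat_split u) (qcat_split v) in huv *.
    case/qadj_cat_inv: huv => [[eb hab] | [ea hab]].
    * have : [set qleft u; qleft v] \in edge_set (@qadj n).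
        by rewrite inE; apply/existsP; exists (qleft u); apply/existsP; exists (qleft v); rewrite hab eqxx.
      rewrite -unE => /bigcupP [i _ /imsetP [x xE ex]].
      have [P [P' [Q [hc e1 e2 e3]]]] := ord_data (qright u) (hamE i) xE.
      have : [set (P, Q); (P', Q)] \in edge_set (@gadj n).
        rewrite inE; apply/existsP; exists (P, Q); apply/existsP; exists (P', Q).
        rewrite eqxx andbT; apply/orP; right; by rewrite eqxx.
      rewrite -unH => /bigcupP [j _ hg].
      exists (i, j) => //; rewrite /fEH /= (ce_map _ (uH j) (Phi_inj (hamE i))).
      apply/imsetP; exists [set (P, Q); (P', Q)] => //.
      rewrite imset2 /Phi_inv /= e1 e2 e3 -eb imset_qcatL ex imset_qcatL //.
    * have : [set qright u; qright v] \in edge_set (@qadj n).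
        by rewrite inE; apply/existsP; exists (qright u); apply/existsP; exists (qright v); rewrite hab eqxx.
      rewrite -unE => /bigcupP [i _ /imsetP [x xE ex]].
      have [P [P' [Q [hc e1 e2 e3]]]] := ord_data (qleft u) (hamE i) xE.
      have : [set (Q, P); (Q, P')] \in edge_set (@gadj n).
        rewrite inE; apply/existsP; exists (Q, P); apply/existsP; exists (Q, P').
        rewrite eqxx andbT; apply/orP; left; by rewrite eqxx.
      rewrite -unH => /bigcupP [j _ hg].
      exists (i, j) => //; rewrite /fEH /= (ce_map _ (uH j) (Phi_inj (hamE i))).
      apply/imsetP; exists [set (Q, P); (Q, P')] => //.
      rewrite imset2 /Phi_inv /= e1 e2 e3 -ea imset_qcatR ex imset_qcatR //.
Qed.
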